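(* Let $p,q,r,s\in\mathrm{baxt}_\infty$ with $\mathrm{ev}(p)=\mathrm{ev}(q)\leqslant\mathrm{ev}(r)$ and $\mathrm{ev}(p)=\mathrm{ev}(q)\leqslant\mathrm{ev}(s)$. Then $spr=sqr$ in $\mathrm{baxt}_\infty$.
   Context: Let $\mathcal{A}=\{1<2<3<\cdots\}$. Right strict binary search tree: labelled rooted binary tree in which each node's label is $\ge$ every label in its left subtree and $<$ every label in its right subtree; inserting $a$: if empty create node $a$, else with root label $x$ insert into right subtree if $a>x$, left subtree otherwise. $\mathrm{P}_{\mathrm{sylv}}(w_1\cdots w_k)$ is obtained from the empty tree by inserting $w_k,\dots,w_1$ in this order. Left strict binary search tree: each node's label is $>$ every label in its left subtree and $\le$ every label in its right subtree; inserting $a$: if empty create node $a$, else with root label $x$ insert into left subtree if $a<x$, right subtree otherwise. $\mathrm{P}^\sharp(w_1\cdots w_k)$ is obtained from the empty tree by inserting $w_1,\dots,w_k$ in this order. Set $\mathrm{P}_{\mathrm{baxt}}(w)=(\mathrm{P}^\sharp(w),\mathrm{P}_{\mathrm{sylv}}(w))$. The Baxter monoid $\mathrm{baxt}_\infty$ is $\mathcal{A}^*/{\equiv}$ with $u\equiv v\iff\mathrm{P}_{\mathrm{baxt}}(u)=\mathrm{P}_{\mathrm{baxt}}(v)$ (a congruence). The evaluation $\mathrm{ev}(u)$ is the tuple $(|u|_a)_{a\in\mathcal{A}}$ of numbers of occurrences of each symbol; it is constant on congruence classes, and $\mathrm{ev}(u)\leqslant\mathrm{ev}(v)$ means $|u|_a\le|v|_a$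 for all $a$. *)

(* Defs.v *)
From mathcomp Require Import all_boot.
Set Implicit Arguments. Unset Strict Implicit. Unset Printing Implicit Defensive.

Definition is_word (w : seq nat) : bool := all (fun a => 0 < a) w.

Inductive btree : Type :=
| Leaf : btree
| Node : btree -> nat -> btree -> btree.

(* Insertion into a right strict binary search tree:
   go right if a > x, left otherwise. *)
Fixpoint ins_right (a : nat) (t : btree) : btree :=
  match t with
  | Leaf => Node Leaf a Leaf
  | Node l x r => if x < a then Node l x (ins_right a r) else Node (ins_right a l) x r
  end.

(* Insertion into a left strict binary search tree:
   go left if a < x, right otherwise. *)
Fixpoint ins_left (a : nat) (t : btree) : btree :=
  match t with
  | Leaf => Node Leaf a Leaf
  | Node l x r => if a < x then Node (ins_left a l) x r else Node l x (ins_left a r)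
  end.

Definition P_sylv (w : seq nat) : btree := foldr ins_right Leaf w.

Definition P_sharp (w : seq nat) : btree := foldl (fun t a => ins_left a t) Leaf w.

Definition P_baxt (w : seq nat) : btree * btree := (P_sharp w, P_sylv w).

Definition baxt_equiv (u v : seq nat) : Prop := P_baxt u = P_baxt v.

Definition ev_le (u v : seq nat) : Prop := forall a : nat, count_mem a u <= count_mem a v.
Definition ev_eq (u v : seq nat) : Prop := forall a : nat, count_mem a u = count_mem a v.

(* Main.v *)
Require Import Defs.
From mathcomp Require Import all_boot.

Section Comm.
Variable T : Type.
Variable f : nat -> T -> T.
Variable h : nat -> T -> bool.
Hypothesis fC : forall a b t, h a t -> h b t -> f a (f b t) = f b (f a t).
Hypothesis hP : forall a b t, h a t -> h a (f b t).
Hypothesis hS : forall a t, h a (f a t).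

Lemma hfold a t s : h a t -> h a (foldr f t s).
Proof. by move=> Ha; elim: s => //= c s IH; apply: hP. Qed.

Lemma hall a t s : a \in s -> h a (foldr f t s).
Proof.
elim: s => //= c s IH; rewrite in_cons; case/orP => [/eqP ->|/IH]; first exact: hS.
exact: hP.
Qed.

Lemma fold_move t s1 s2 a : all (h^~ t) (a :: s1 ++ s2) ->
  foldr f t (s1 ++ a :: s2) = f a (foldr f t (s1 ++ s2)).
Proof.
elim: s1 => //= c s1 IH /and3P [Ha Hc Hr].
rewrite IH /=; last by rewrite Ha.
by rewrite fC //; apply: hfold.
Qed.

Lemma fold_perm t p q : all (h^~ t) p -> perm_eq p q -> foldr f t p = foldr f t q.
Proof.
elim: p q => [|a p IH] q.
  by move=> _ /perm_size /esym /size0nil ->.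
move=> Hall Hpq.
have aq : a \in q by rewrite -(perm_mem Hpq) mem_head.
move: Hpq; case/splitPr: aq => q1 q2 Hpq.
have Hp : perm_eq p (q1 ++ q2).
  rewrite -(perm_cons a); apply: (perm_trans Hpq); apply/permP => P /=; by rewrite !count_cat /= addnCA.
rewrite fold_move /=; first by rewrite (IH (q1 ++ q2)) //; case/andP: Hall.
by rewrite -(perm_all _ Hp).
Qed.
End Comm.

Fixpoint hitR (a : nat) (t : btree) : bool :=
  match t with
  | Leaf => false
  | Node l x r => (x == a) || (if x < a then hitR a r else hitR a l)
  end.

Fixpoint hitL (a : nat) (t : btree) : bool :=
  match t with
  | Leaf => false
  | Node l x r => (x == a) || (if a < x then hitL a l else hitL a r)
  end.

Lemma hitR_ins a b t : hitR a t -> hitR a (ins_right b t).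
Proof.
elim: t => //= l IHl x r IHr.
case E: (x == a) => /= H; first by case: (x < b) => /=; rewrite E.
by case: (x < b) => /=; rewrite E /=; case: (x < a) H => H; rewrite ?IHl ?IHr ?H ?orbT.
Qed.

Lemma hitR_self a t : hitR a (ins_right a t).
Proof. elim: t => /= [|l IHl x r IHr]; first by rewrite eqxx.
by case E: (x < a) => /=; rewrite E ?IHl ?IHr ?orbT.
Qed.

Lemma hitL_ins a b t : hitL a t -> hitL a (ins_left b t).
Proof.
elim: t => //= l IHl x r IHr.
case E: (x == a) => /= H; first by case: (b < x) => /=; rewrite E.
by case: (b < x) => /=; rewrite E /=; case: (a < x) H => H; rewrite ?IHl ?IHr ?H ?orbT.
Qed.

Lemma hitL_self a t : hitL a (ins_left a t).
Proof. elim: t => /= [|l IHl x r IHr]; first by rewrite eqxx.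
by case E: (a < x) => /=; rewrite E ?IHl ?IHr ?orbT.
Qed.

Lemma commR_lt a b t : hitR a t -> a < b ->
  ins_right a (ins_right b t) = ins_right b (ins_right a t).
Proof.
elim: t => //= l IHl x r IHr Ha ab.
case: (eqVneq x a) => [->|xa].
  by rewrite ab ltnn /= ab ltnn.
move: Ha; rewrite (negbTE xa) /=.
case: (ltnP x a) => xa' Ha.
  have xb : x < b by apply: ltn_trans ab.
  by rewrite xb /= xb xa' IHr.
case: (ltnP x b) => xb /=; rewrite ?xb ?ltnNge ?xa' ?xb //=.
by rewrite IHl.
Qed.

Lemma commR a b t : hitR a t -> hitR b t ->
  ins_right a (ins_right b t) = ins_right b (ins_right a t).
Proof.
move=> Ha Hb; case: (ltngtP a b) => ab.
- exact: commR_lt.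
- by rewrite (@commR_lt b a t Hb ab).
- by rewrite ab.
Qed.

Lemma commL_lt a b t : hitL b t -> a < b ->
  ins_left a (ins_left b t) = ins_left b (ins_left a t).
Proof.
elim: t => //= l IHl x r IHr Hb ab.
case: (eqVneq x b) => [->|xb].
  by rewrite ab ltnn /= ab ltnn.
move: Hb; rewrite (negbTE xb) /=.
case: (ltnP b x) => bx Hb.
  have ax : a < x by apply: ltn_trans bx.
  by rewrite ax /= ax bx IHl.
case: (ltnP a x) => ax /=; rewrite ?ax ?ltnNge ?bx ?ax //=.
by rewrite IHr.
Qed.

Lemma commL a b t : hitL a t -> hitL b t ->
  ins_left a (ins_left b t) = ins_left b (ins_left a t).
Proof.
move=> Ha Hb; case: (ltngtP a b) => ab.
- exact: commL_lt.
- by rewrite (@commL_lt b a t Ha ab).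
- by rewrite ab.
Qed.

Theorem lemma4p8 (p q r s : seq nat) :
  is_word p -> is_word q -> is_word r -> is_word s ->
  ev_eq p q -> ev_le q r -> ev_le q s ->
  baxt_equiv (s ++ p ++ r) (s ++ q ++ r).
Proof.
move=> _ _ _ _ Hpq Hqr Hqs.
have Hperm : perm_eq p q by apply/allP => x _; apply/eqP; apply: Hpq.
have sub : forall w, ev_le q w -> {subset p <= w}.
  move=> w Hw a ap; apply/negPn/negP => /count_memPn H0.
  have := Hw a; rewrite H0 leqn0 -Hpq => /eqP /count_memPn.
  by rewrite ap.
rewrite /baxt_equiv /P_baxt; congr pair.
- rewrite /P_sharp !foldl_cat.
  set g := (fun (t : btree) (a : nat) => ins_left a t).
  set t0 := foldl g Leaf s.
  suff -> : foldl g t0 p = foldl g t0 q by [].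
  rewrite -(revK p) -(revK q) !foldl_rev.
  apply: (@fold_perm _ _ hitL) => //.
  + move=> a b t; exact: commL.
  + move=> a b t; exact: hitL_ins.
  + apply/allP => a; rewrite mem_rev => ap.
    rewrite /t0 -(revK s) foldl_rev.
    apply: (@hall _ _ hitL); first by move=> *; exact: hitL_ins.
      by move=> *; exact: hitL_self.
    by rewrite mem_rev; apply: (sub s).
  + by rewrite perm_rev perm_sym perm_rev perm_sym.
- rewrite /P_sylv !foldr_cat; congr foldr.
  apply: (@fold_perm _ _ hitR) => //.
  + move=> a b t; exact: commR.
  + move=> a b t; exact: hitR_ins.
  + apply/allP => a ap.
    apply: (@hall _ _ hitR); first by move=> *; exact: hitR_ins.
      by move=> *; exact: hitR_self.
    exact: (sub r).
Qed.
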